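(* Let $f: S^1 \rightarrow S^1$ be a Morse-Smale diffeomorphism. Then the topological entropy of the induced continuum map $C(f): C(S^1)\to C(S^1)$ is zero.
   Context: A $C^r$ diffeomorphism ($r\ge1$) is Morse-Smale if its nonwandering set consists of finitely many periodic points, all hyperbolic, with mutually transversal stable and unstable manifolds. $C(S^1)$ is the hyperspace of nonempty compact connected subsets of $S^1$ with the Hausdorff metric and $C(f)(A)=f(A)$. *)

(* Defs.v *)
From HB Require Import structures.
From mathcomp Require Import all_boot all_order all_algebra.
From mathcomp Require Import all_classical all_reals all_analysis.
Set Implicit Arguments. Unset Strict Implicit. Unset Printing Implicit Defensive.
Import Order.TTheory GRing.Theory Num.Theory.
Import numFieldNormedType.Exports.
Local Open Scope classical_set_scope.
Local Open Scope ring_scope.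

Section Circle.
Variable R : realType.
Implicit Types (p q : R * R) (t : R).

Definition pdist p q : R := Num.sqrt ((p.1 - q.1) ^+ 2 + (p.2 - q.2) ^+ 2).

Definition S1 : set (R * R) := [set p | p.1 ^+ 2 + p.2 ^+ 2 = 1].
Definition expc t : R * R := (cos (2 * pi * t), sin (2 * pi * t)).

Definition is_lift (f : R * R -> R * R) (F : R -> R) :=
  forall t, f (expc t) = expc (F t).

(** f restricted to S^1 is a C^1 diffeomorphism of S^1: it is a bijection of
    S^1 having a C^1 lift with nowhere vanishing derivative. *)
Definition C1_lift (F : R -> R) :=
  (forall t, derivable F t 1) /\ continuous (derive1 F) /\ (forall t, derive1 F t != 0).

Definition C1_diffeo_S1 (f : R * R -> R * R) (F : R -> R) :=
  set_bij S1 S1 f /\ is_lift f F /\ C1_lift F.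

Definition periodic_pt (f : R * R -> R * R) p :=
  S1 p /\ exists2 n : nat, (0 < n)%N & iter n f p = p.

(** hyperbolicity: |(f^n)'(p)| <> 1, the derivative computed in the angle
    coordinate through the lift F (well defined). *)
Definition hyperbolic_pt (f : R * R -> R * R) (F : R -> R) p :=
  forall (t : R) (n : nat), expc t = p -> (0 < n)%N -> iter n f p = p ->
    `| derive1 (iter n F) t | != 1.

Definition nonwandering (f : R * R -> R * R) : set (R * R) :=
  [set x | S1 x /\ forall e : R, 0 < e ->
     exists n : nat, (0 < n)%N /\
       exists y, S1 y /\ pdist y x < e /\ pdist (iter n f y) x < e].

Definition Wstable (f : R * R -> R * R) p : set (R * R) :=
  [set x | S1 x /\ (fun k => pdist (iter k f x) (iter k f p)) @ \oo --> (0:R)].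

Definition Wunstable (f : R * R -> R * R) p : set (R * R) :=
  [set x | S1 x /\ exists xs ps : nat -> R * R,
     [/\ xs 0%N = x, ps 0%N = p,
         (forall k, S1 (xs k) /\ S1 (ps k)),
         (forall k, f (xs k.+1) = xs k /\ f (ps k.+1) = ps k) &
         (fun k => pdist (xs k) (ps k)) @ \oo --> (0:R)]].

(** A subset A of S^1 has a nonzero tangent vector at x: there is a C^1-at-0
    curve (in the angle coordinate) through x, staying in A near 0, with
    nonzero velocity. *)
Definition nonzero_tangent (A : set (R * R)) (x : R * R) :=
  exists (g : R -> R), expc (g 0) = x /\ derivable g 0 1 /\ derive1 g 0 != 0 /\
    \forall s \near (0:R), A (expc (g s)).

(** Transversality in the 1-dimensional manifold S^1:
    T_x A + T_x B = T_x S^1 (= R) at every intersection point x, i.e.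
    one of the tangent spaces is nonzero. *)
Definition transversal (A B : set (R * R)) :=
  forall x, A x -> B x -> nonzero_tangent A x \/ nonzero_tangent B x.

(** Morse-Smale diffeomorphism of S^1 (C^r, r >= 1; we use r = 1, which is
    the most general case). *)
Definition morse_smale (f : R * R -> R * R) :=
  exists F : R -> R, C1_diffeo_S1 f F /\
    finite_set (nonwandering f) /\
    (forall p, nonwandering f p -> periodic_pt f p /\ hyperbolic_pt f F p) /\
    (forall p q, nonwandering f p -> nonwandering f q ->
       transversal (Wstable f p) (Wunstable f q)).

Definition CS1 : set (set (R * R)) :=
  [set A | A !=set0 /\ A `<=` S1 /\ compact A /\ connected A].

Definition hausdorff_dist (A B : set (R * R)) : R :=
  Num.max (sup [set inf [set pdist a b | b in B] | a in A])
          (sup [set inf [set pdist a b | a in A] | b in B]).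

Definition Cmap (f : R * R -> R * R) (A : set (R * R)) : set (R * R) := f @` A.

End Circle.

(** Topological entropy (Bowen's separated-set definition) of g : X -> X on
    a compact metric space (X, d). *)
Section Entropy.
Variables (R : realType) (T : Type).

Definition separated_family (X : set T) (d : T -> T -> R) (g : T -> T)
  (n : nat) (e : R) (m : nat) (E : 'I_m -> T) :=
  (forall i, X (E i)) /\
  (forall i j, i != j -> exists2 k : nat, (k < n)%N &
       e < d (iter k g (E i)) (iter k g (E j))).

Definition max_separated X d g n e : \bar R :=
  ereal_sup [set (m%:R)%:E | m in [set m : nat |
     exists E, @separated_family X d g n e m E]].

Definition elog (x : \bar R) : \bar R :=
  match x with
  | r%:E => (ln r)%:E
  | +oo%E => +oo%E
  | -oo%E => -oo%E
  end.

Local Open Scope ereal_scope.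
Definition topological_entropy (X : set T) (d : T -> T -> R) (g : T -> T)
  : \bar R :=
  ereal_sup [set limn_esup (fun n : nat =>
                 ((n%:R)^-1)%:E * elog (max_separated X d g n e))
            | e in [set e : R | (0 < e)%R]].
End Entropy.

(* Main.v *)
Require Import Defs.
From HB Require Import structures.
From mathcomp Require Import all_boot all_order all_algebra.
From mathcomp Require Import all_classical all_reals all_analysis.
From mathcomp Require Import ring lra zify.
Set Implicit Arguments. Unset Strict Implicit. Unset Printing Implicit Defensive.
Import Order.TTheory GRing.Theory Num.Theory.
Import numFieldNormedType.Exports.
Local Open Scope classical_set_scope.
Local Open Scope ring_scope.

Section P1.
Variable R : realType.
Implicit Types (t x y : R).

Lemma two_pi : 2 * pi = pi *+ 2 :> R.
Proof. by rewrite mulr_natl. Qed.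

Lemma expcD1 t : expc (t + 1) = expc t.
Proof.
by rewrite /expc mulrDr mulr1 two_pi cosD2pi sinD2pi.
Qed.

Lemma expcDn t (n : nat) : expc (t + n%:R) = expc t.
Proof.
elim: n => [|n IH]; first by rewrite addr0.
by rewrite -natr1 addrA expcD1.
Qed.

Lemma expcBn t (n : nat) : expc (t - n%:R) = expc t.
Proof. by rewrite -(expcDn (t - n%:R) n) subrK. Qed.

Lemma expcDz t (k : int) : expc (t + k%:~R) = expc t.
Proof.
case: k => n; first by rewrite -pmulrn expcDn.
by rewrite NegzE mulrNz -pmulrn expcBn.
Qed.

End P1.

Section P2.
Variable R : realType.
Implicit Types (t x y r s z : R).

Lemma cos2pi_eq1 r : 0 <= r < 1 -> cos (2 * pi * r) = 1 -> r = 0.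
Proof.
move=> /andP[r0 r1] c1.
have pi0 := @pi_gt0 R.
have key : forall s, 0 <= s <= 1/2 -> cos (2 * pi * s) = 1 -> s = 0.
  move=> s /andP[s0 s1] cs.
  have : 2 * pi * s = 0.
    apply: cos_inj; rewrite ?cs ?cos0//; rewrite in_itv /=; apply/andP; split; nra.
  move=> h; nra.
have [rh|rh] := leP r (1/2); first by apply: key => //; rewrite r0 rh.
have : 1 - r = 0.
  apply: key; first by apply/andP; split; lra.
  have := expcD1 (- r); rewrite /expc => -[] + _.
  by rewrite addrC => ->; rewrite mulrN cosN.
lra.
Qed.


End P2.

Section P2b.
Variable R : realType.
Lemma expc_eq (x y : R) : expc x = expc y -> exists k : int, x = y + k%:~R.
Proof.
move=> e.
have c1 : cos (2 * pi * (x - y)) = 1.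
  move: e; rewrite /expc => -[cx sx].
  by rewrite mulrBr cosB cx sx -!expr2 cos2Dsin2.
set z := x - y in c1.
exists (Num.floor z).
have := expcDz z (- Num.floor z); rewrite /expc => -[] + _.
rewrite c1 intrN => h.
have r0 : z - (Num.floor z)%:~R = 0.
  apply: cos2pi_eq1 h.
  have := floor_itv z; rewrite intrD /= => /andP[h1 h2].
  apply/andP; split; lra.
by move: r0; rewrite /z; lra.
Qed.
End P2b.

Section P2c.
Variable R : realType.

Lemma expc_angle (th : R) : expc (th / (2 * pi)) = (cos th, sin th).
Proof.
have pi0 := @pi_gt0 R.
by rewrite /expc mulrC divfK // mulf_neq0 // gt_eqF.
Qed.

Lemma S1_expc0 (p : R * R) : S1 p -> exists th : R, expc th = p.
Proof.
case: p => p1 p2; rewrite /S1 /= => h.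
have hp1 : -1 <= p1 <= 1.
  have : p1 ^+ 2 <= 1 by nra.
  by move=> hh; apply/andP; split; nra.
have ca := acosK; have sa := sin_acos hp1.
have e2 : Num.sqrt (1 - p1 ^+ 2) = `|p2|.
  by rewrite -sqrtr_sqr; congr Num.sqrt; lra.
have cp : cos (acos p1) = p1 by apply: acosK; rewrite in_itv /=.
have [p2ge|p2lt] := leP 0 p2.
  exists (acos p1 / (2 * pi)); rewrite expc_angle cp sa e2 ger0_norm //.
exists (- acos p1 / (2 * pi)); rewrite expc_angle cosN sinN cp sa e2 ltr0_norm //.
by rewrite opprK.
Qed.

Lemma S1_expc (p : R * R) (b : R) : S1 p ->
  exists u : R, [/\ b <= u, u < b + 1 & expc u = p].
Proof.
move=> /S1_expc0 [th <-].
exists (th - (Num.floor (th - b))%:~R).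
have := floor_itv (th - b); rewrite intrD /= => /andP[h1 h2].
split; [lra|lra|].
by rewrite -intrN expcDz.
Qed.

Lemma expc_S1 (t : R) : S1 (expc t).
Proof. by rewrite /S1 /expc /= cos2Dsin2. Qed.

End P2c.

Section P2d.
Variable R : realType.

Lemma lip1 (f df : R -> R) : (forall x : R, is_derive x (1:R) f (df x)) ->
  continuous f -> (forall x, `|df x| <= 1) ->
  forall a b, `|f b - f a| <= `|b - a|.
Proof.
move=> fd fc dfb.
suff H : forall a b, a <= b -> `|f b - f a| <= `|b - a|.
  move=> a b; have [ab|ba] := leP a b; first exact: H.
  by rewrite distrC (distrC b); apply: H; exact: ltW.
move=> a b ab.
have [c _ ->] := MVT_segment ab (fun x _ => fd x)
  (continuous_subspaceT fc).
by rewrite normrM ler_piMl.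
Qed.

Lemma lip_cos a b : `|cos b - cos a| <= `|b - a| :> R.
Proof.
apply: (@lip1 cos (fun x => - sin x)) => //.
- exact: continuous_cos.
- by move=> x; rewrite normrN sin_max.
Qed.

Lemma lip_sin a b : `|sin b - sin a| <= `|b - a| :> R.
Proof.
apply: (@lip1 sin cos) => //.
- exact: continuous_sin.
- by move=> x; rewrite cos_max.
Qed.

Lemma pdist_expc (x y : R) : pdist (expc x) (expc y) <= 4 * pi * `|x - y|.
Proof.
have pi0 := @pi_gt0 R.
rewrite /pdist /expc /=.
set a := 2 * pi * x; set b := 2 * pi * y.
have h1 := lip_cos b a; have h2 := lip_sin b a.
have hab : `|a - b| = 2 * pi * `|x - y|.
  have p2 : 0 <= 2 * pi :> R by nra.
  by rewrite /a /b -mulrBr normrM (ger0_norm p2).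
rewrite hab in h1 h2.
have e : 4 * pi * `|x - y| = Num.sqrt ((4 * pi * `|x - y|) ^+ 2).
  have K0 : 0 <= 4 * pi * `|x - y| by have := normr_ge0 (x - y); nra.
  by rewrite sqrtr_sqr (ger0_norm K0).
rewrite e ler_sqrt; last by rewrite sqr_ge0.
rewrite -(real_normK (num_real (cos a - cos b))) -(real_normK (num_real (sin a - sin b))).
set u := `|cos a - cos b| in h1 *; set v := `|sin a - sin b| in h2 *; set w := `|x - y| in h1 h2 *.
have u0 : 0 <= u by apply: normr_ge0.
have v0 : 0 <= v by apply: normr_ge0.
have w0 : 0 <= w by apply: normr_ge0.
have hu : u ^+ 2 <= (2 * pi * w) ^+ 2 by nra.
have hv : v ^+ 2 <= (2 * pi * w) ^+ 2 by nra.
nra.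
Qed.

End P2d.

Section P3.
Variable R : realType.

Lemma ivt_noroot (g : R -> R) : continuous g -> (forall t, g t != 0) ->
  forall a b, g a < 0 -> 0 < g b -> False.
Proof.
move=> gc gnz.
suff H : forall a b, a <= b -> g a * g b < 0 -> False.
  move=> a b ha hb; have [ab|ba] := leP a b.
    by apply: (H a b ab); nra.
  by apply: (H b a (ltW ba)); nra.
move=> a b ab hab.
have hv : Num.min (g a) (g b) <= 0 <= Num.max (g a) (g b).
  rewrite ge_min le_max.
  have [ga|ga] := leP (g a) 0.
    by apply/andP; split; apply/orP; [left|right]; nra.
  by apply/andP; split; apply/orP; [right|left]; nra.
have [c _ gc0] := IVT ab (continuous_subspaceT gc) hv.
by have := gnz c; rewrite gc0 eqxx.
Qed.

Lemma cont_sign (g : R -> R) : continuous g -> (forall t, g t != 0) ->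
  exists s : R, (s = 1 \/ s = -1) /\ forall t, 0 < s * g t.
Proof.
move=> gc gnz.
have key := ivt_noroot gc gnz.
have [g0|g0] := ltP 0 (g 0).
  exists 1; split; first by left.
  move=> t; rewrite mul1r; have := gnz t; rewrite neq_lt => /orP[h|h] //.
  by case: (key t 0).
exists (-1); split; first by right.
have g0' : g 0 < 0 by rewrite lt_neqAle g0 andbT; exact: gnz.
move=> t; rewrite mulN1r oppr_gt0; have := gnz t; rewrite neq_lt => /orP[h|h] //.
by case: (key 0 t).
Qed.

Lemma int_not_in01 (k : int) : 0 < k%:~R :> R -> k%:~R < 1 :> R -> False.
Proof. by rewrite ltr0z ltrz1; lia. Qed.

Lemma int_not_half (k : int) : k%:~R = 1 / 2 :> R -> False.
Proof.
move=> h.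
have : (k * 2)%:~R = 1%:~R :> R by rewrite intrM h; lra.
by move/intr_inj; lia.
Qed.

End P3.

Section P3b.
Variable R : realType.

Lemma ms_lift (f : R * R -> R * R) : morse_smale f ->
  exists F : R -> R, exists s : R,
  [/\ s = 1 \/ s = -1, continuous F, is_lift f F,
      (forall t, F (t + 1) = F t + s) &
      (forall x y, x < y -> s * F x < s * F y)].
Proof.
move=> [F [[[_ finj _] [lift [der [dc dnz]]]] _]].
have Fc : continuous F.
  by move=> t; apply: differentiable_continuous; apply/derivable1_diffP; exact: der.
have [s [hs sF']] := cont_sign dc dnz.
have ss : s * s = 1 by case: hs => ->; rewrite ?mulr1 ?mulrNN ?mulr1.
have mono : forall x y, x < y -> s * F x < s * F y.
  move=> x y xy.
  have hd : forall z, z \in `]x, y[ -> is_derive z 1 F (derive1 F z).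
    by move=> z _; rewrite derive1E; exact/derivableP/der.
  have [c _ e] := MVT xy hd (continuous_subspaceT Fc).
  have := sF' c; have : 0 < y - x by lra.
  move: e; set D := derive1 F c; nra.
pose g t := F (t + 1) - F t.
have gint : forall t, exists k : int, g t = k%:~R.
  move=> t; have e : expc (F (t + 1)) = expc (F t) by rewrite -!lift expcD1.
  by have [k ek] := expc_eq e; exists k; rewrite /g ek; ring.
have gc : continuous g.
  move=> t; apply: continuousB; last exact: Fc.
  have h1 : {for t, continuous (fun t : R => t + 1)}.
    by apply: continuousD; [exact: cvg_id|exact: cvg_cst].
  exact: (continuous_comp h1 (Fc _)).
have nothalf : forall (m : int) u, g u != m%:~R + 1/2.
  move=> m u; apply/eqP => e; have [ku eu] := gint u.
  apply: (@int_not_half R (ku - m)); rewrite intrB -eu e; ring.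
have gconst : forall t, g t = g 0.
  move=> t; have [k0 e0] := gint 0; have [kt et] := gint t.
  have [//|ne] := eqVneq (g t) (g 0).
  have [lt|lt] := ltP k0 kt.
    pose h u := g u - (k0%:~R + 1/2).
    have hc : continuous h.
      by move=> u; apply: continuousB; [exact: gc|exact: cvg_cst].
    have hnz : forall u, h u != 0 by move=> u; rewrite /h subr_eq0 nothalf.
    case: (ivt_noroot hc hnz (a := 0) (b := t)); rewrite /h ?e0 ?et; first lra.
    have : (k0 + 1 <= kt)%R by lia.
    rewrite -(ler_int R) intrD; lra.
  have lt' : (kt < k0)%R.
    rewrite lt_neqAle lt andbT; apply/eqP => kk; move: ne; rewrite et e0 kk eqxx //.
  pose h u := g u - (kt%:~R + 1/2).
  have hc : continuous h.
    by move=> u; apply: continuousB; [exact: gc|exact: cvg_cst].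
  have hnz : forall u, h u != 0 by move=> u; rewrite /h subr_eq0 nothalf.
  case: (ivt_noroot hc hnz (a := t) (b := 0)); rewrite /h ?e0 ?et; first lra.
  have : (kt + 1 <= k0)%R by lia.
  rewrite -(ler_int R) intrD; lra.
have [k0 e0] := gint 0.
have Fd : forall t, F (t + 1) = F t + k0%:~R.
  by move=> t; rewrite -e0 -(gconst t) /g; ring.
have F1 : F 1 = F 0 + k0%:~R by have := Fd 0; rewrite add0r.
have sd0 : 0 < s * k0%:~R.
  have := mono 0 1 ltr01; rewrite F1; lra.
have sd1 : s * k0%:~R <= 1.
  rewrite leNgt; apply/negP => sd1.
  have hv : Num.min (s * F 0) (s * F 1) <= s * F 0 + 1 <= Num.max (s * F 0) (s * F 1).
    rewrite ge_min le_max F1; apply/andP; split; apply/orP; [left|right]; lra.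
  have sFc : continuous (fun x => s * F x).
    by move=> x; apply: continuousM; [exact: cvg_cst|exact: Fc].
  have [u /andP[u0 u1] eu] := IVT ler01 (continuous_subspaceT sFc) hv.
  rewrite bnd_simp in u0 u1.
  have Fu : F u = F 0 + s.
    have -> : F u = s * (s * F u) by rewrite mulrA ss mul1r.
    by rewrite eu mulrDr mulrA ss mul1r mulr1.
  have ee : expc (F u) = expc (F 0).
    rewrite Fu; case: hs => ->; first by rewrite expcD1.
    by have := expcDz (F 0) (-1); rewrite intrN.
  have ef : f (expc u) = f (expc 0) by rewrite !lift ee.
  have := finj _ _ (mem_set (expc_S1 u)) (mem_set (expc_S1 0)) ef.
  move/expc_eq => [k]; rewrite add0r => ek.
  have un0 : u != 0.
    apply/eqP => u00; move: eu; rewrite u00; lra.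
  have un1 : u != 1.
    apply/eqP => u11; move: eu; rewrite u11 F1; lra.
  apply: (@int_not_in01 R k); rewrite -ek lt_neqAle ?u0 ?u1 ?andbT.
    by rewrite eq_sym un0.
  by rewrite un1.
have dk : k0%:~R = s.
  case: hs => hs; move: sd0 sd1; rewrite hs.
    rewrite !mul1r ltr0z lerz1 => a b.
    by have -> : k0 = 1 by lia.
  rewrite !mulN1r oppr_gt0 lerNl ltrz0 => a b.
  have : (-1 <= k0)%R by rewrite -(ler_int R).
  by move=> c; have -> : k0 = -1 by lia.
exists F, s; split => //.
by move=> t; rewrite Fd dk.
Qed.

End P3b.

Section P4.
Variable R : realType.
Variables (f : R * R -> R * R) (F : R -> R) (s : R).
Hypothesis hs : s = 1 \/ s = -1.
Hypothesis lift : is_lift f F.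
Hypothesis Fd : forall t, F (t + 1) = F t + s.
Hypothesis mono : forall x y, x < y -> s * F x < s * F y.

Lemma iter_lift k t : iter k f (expc t) = expc (iter k F t).
Proof. by elim: k => [//|k IH]; rewrite !iterS IH lift. Qed.

Lemma sexp k : s ^+ k = 1 \/ s ^+ k = -1.
Proof.
elim: k => [|k [IH|IH]]; first by left; rewrite expr0.
  by rewrite exprS IH mulr1.
by rewrite exprS IH; case: hs => ->; [right|left]; ring.
Qed.

Lemma Fdm t : F (t - 1) = F t - s.
Proof. by have := Fd (t - 1); rewrite subrK => ->; ring. Qed.

Lemma iterFd k t : iter k F (t + 1) = iter k F t + s ^+ k.
Proof.
elim: k => [|k IH]; first by rewrite expr0.
rewrite !iterS IH exprS.
case: (sexp k) => ->; first by rewrite Fd mulr1.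
by rewrite Fdm; ring.
Qed.

Lemma monoW x y : x <= y -> s * F x <= s * F y.
Proof. by rewrite le_eqVlt => /orP[/eqP->//|/mono/ltW]. Qed.

Lemma iter_mono k x y : x <= y -> s ^+ k * iter k F x <= s ^+ k * iter k F y.
Proof.
move=> xy; elim: k => [|k IH]; first by rewrite !expr0 !mul1r.
rewrite !iterS exprS; case: (sexp k) => e; rewrite e in IH *.
  by rewrite !mul1r in IH; rewrite !mulr1; exact: monoW.
rewrite !mulN1r lerN2 in IH; have := monoW IH; lra.
Qed.

Definition G k t := s ^+ k * iter k F t.

Lemma GD1 k t : G k (t + 1) = G k t + 1.
Proof.
rewrite /G iterFd mulrDr; congr (_ + _).
by case: (sexp k) => ->; ring.
Qed.

Lemma G_mono k x y : x <= y -> G k x <= G k y.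
Proof. exact: iter_mono. Qed.

Lemma G_dist k x y : `|G k x - G k y| = `|iter k F x - iter k F y|.
Proof.
rewrite /G -mulrBr normrM; case: (sexp k) => ->.
  by rewrite normr1 mul1r.
by rewrite normrN normr1 mul1r.
Qed.

End P4.

Section P5.
Variable R : realType.
Variable G : nat -> R -> R.
Hypothesis GD : forall k t, G k (t + 1) = G k t + 1.
Hypothesis Gm : forall k x y, x <= y -> G k x <= G k y.
Variables (n N : nat).
Hypothesis N0 : (0 < N)%N.

Definition cc k u : int := Num.floor (N%:R * G k u).
Definition sig u : int := \sum_(k < n) (cc k u - cc k 0).

Lemma cc_mono k u v : u <= v -> cc k u <= cc k v.
Proof.
move=> uv; apply: le_floor; apply: ler_wpM2l; first by rewrite ler0n.
exact: Gm.
Qed.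

Lemma cc_bnd k u : 0 <= u <= 1 -> 0 <= cc k u - cc k 0 <= N%:Z.
Proof.
move=> /andP[u0 u1]; rewrite subr_ge0 cc_mono //=.
have h1 : cc k u <= cc k 1 by apply: cc_mono.
have h2 : cc k 1 = cc k 0 + N%:Z.
  have g1 := GD k 0; rewrite add0r in g1.
  rewrite /cc g1 mulrDr mulr1 floorDrz; last first.
    exact: natr_int.
  by rewrite pmulrn intrKfloor.
rewrite lerBlDr addrC -h2 //.
Qed.

Lemma sig_mono u v : u <= v -> sig u <= sig v.
Proof.
move=> uv; apply: ler_sum => k _; rewrite lerD2r; exact: cc_mono.
Qed.

Lemma sig_range u : 0 <= u <= 1 -> 0 <= sig u <= (n * N)%:Z.
Proof.
move=> hu; apply/andP; split.
  by apply: sumr_ge0 => k _; have /andP[] := cc_bnd k hu.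
apply: (@le_trans _ _ (\sum_(k < n) N%:Z)).
  by apply: ler_sum => k _; have /andP[] := cc_bnd k hu.
by rewrite sumr_const card_ord; lia.
Qed.

Lemma sig_eq u v : u <= v -> sig u = sig v -> forall k : 'I_n, cc k u = cc k v.
Proof.
move=> uv e k.
have h : \sum_(k < n) (cc k v - cc k u) = sig v - sig u.
  by rewrite /sig -sumrB; apply: eq_bigr => i _; ring.
rewrite -e subrr in h.
have hz : forall i : 'I_n, true -> 0 <= cc i v - cc i u.
  by move=> i _; rewrite subr_ge0 cc_mono.
have := psumr_eq0P hz h (i := k) isT.
by move/eqP; rewrite subr_eq0 => /eqP.
Qed.

Lemma cc_close k u v : cc k u = cc k v -> `|G k u - G k v| < N%:R^-1.
Proof.
move=> e.
have N0' : 0 < N%:R :> R by rewrite ltr0n.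
have := floor_itv (N%:R * G k u); have := floor_itv (N%:R * G k v).
rewrite -/(cc k u) -/(cc k v) e intrD /=.
move=> /andP[a1 a2] /andP[b1 b2].
have hh : `|N%:R * G k u - N%:R * G k v| < 1.
  rewrite ltr_norml; apply/andP; split; lra.
rewrite -mulrBr normrM (gtr0_norm N0') in hh.
by rewrite -(mulr1 N%:R^-1) ltr_pdivlMl.
Qed.

Lemma sig_close u v : 0 <= u <= 1 -> 0 <= v <= 1 -> sig u = sig v ->
  forall k, (k < n)%N -> `|G k u - G k v| < N%:R^-1.
Proof.
move=> hu hv e k kn.
have [uv|vu] := leP u v.
  by apply: cc_close; exact: (sig_eq uv e (Ordinal kn)).
rewrite distrC; apply: cc_close.
exact: (sig_eq (ltW vu) (esym e) (Ordinal kn)).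
Qed.

End P5.

Section P6.
Variable R : realType.
Implicit Types (v w : R).

Lemma cos_gt_lem v w : 0 < w < 1 -> `|v| < w / 2 -> cos (pi * w) < cos (2 * pi * v).
Proof.
move=> /andP[w0 w1] vw.
have pi0 := @pi_gt0 R.
have nv := normr_ge0 v.
have p2 : 0 <= 2 * pi :> R by nra.
rewrite -(cos_norm (2 * pi * v)) normrM (ger0_norm p2) ltr_cos; first by nra.
  by rewrite in_itv /=; apply/andP; split; nra.
by rewrite in_itv /=; apply/andP; split; nra.
Qed.

Lemma cos_lt_lem v w : 0 < w < 1 -> w / 2 < v < 1 - w / 2 ->
  cos (2 * pi * v) < cos (pi * w).
Proof.
move=> /andP[w0 w1] /andP[v1 v2].
have pi0 := @pi_gt0 R.
have [vh|vh] := leP v (1/2).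
  rewrite ltr_cos; first by nra.
    by rewrite in_itv /=; apply/andP; split; nra.
  by rewrite in_itv /=; apply/andP; split; nra.
have -> : cos (2 * pi * v) = cos (2 * pi * (1 - v)).
  have -> : 2 * pi * (1 - v) = - (2 * pi * v) + pi *+ 2 by rewrite -two_pi; ring.
  by rewrite cosD2pi cosN.
rewrite ltr_cos; first by nra.
  by rewrite in_itv /=; apply/andP; split; nra.
by rewrite in_itv /=; apply/andP; split; nra.
Qed.

Definition Lch (b d : R) (p : R * R) : R :=
  p.1 * cos (2 * pi * ((b + d) / 2)) + p.2 * sin (2 * pi * ((b + d) / 2))
  - cos (pi * (d - b)).

Lemma Lch_expc b d u :
  Lch b d (expc u) = cos (2 * pi * (u - (b + d) / 2)) - cos (pi * (d - b)).
Proof. by rewrite /Lch /expc /= (mulrBr (2 * pi) u) (cosB (2 * pi * u)). Qed.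

Lemma Lch_cont b d : continuous (Lch b d).
Proof.
move=> p; rewrite /Lch.
set a := cos _; set c := sin _; set e := cos _.
apply: (@continuousB _ _ _ (fun p : R * R => p.1 * a + p.2 * c) (fun=> e)); last exact: cvg_cst.
apply: (@continuousD _ _ _ (fun p : R * R => p.1 * a) (fun p : R * R => p.2 * c)).
  apply: (@continuousM _ _ (fun p : R * R => p.1) (fun=> a)); last exact: cvg_cst.
  exact: cvg_fst.
apply: (@continuousM _ _ (fun p : R * R => p.2) (fun=> c)); last exact: cvg_cst.
exact: cvg_snd.
Qed.

Lemma no_alt (A : set (R * R)) : connected A -> A `<=` @S1 R ->
  forall a b c d, a < b -> b < c -> c < d -> d < a + 1 ->
  A (expc a) -> A (expc c) -> ~ A (expc b) -> ~ A (expc d) -> False.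
Proof.
move=> Acon AS a b c d ab bc cd da Aa Ac Nb Nd.
set w := d - b.
have hw : 0 < w < 1 by apply/andP; split; rewrite /w; lra.
set m := (b + d) / 2.
have Lc : 0 < Lch b d (expc c).
  rewrite Lch_expc subr_gt0 -/w; apply: cos_gt_lem => //.
  by rewrite ltr_norml; apply/andP; split; rewrite /w; lra.
have La : Lch b d (expc a) < 0.
  rewrite -expcD1 Lch_expc subr_lt0 -/w; apply: cos_lt_lem => //.
  by apply/andP; split; rewrite /w; lra.
have Lnz : forall p, A p -> Lch b d p != 0.
  move=> p Ap; have [u [u1 u2 eu]] := S1_expc b (AS _ Ap); rewrite -eu in Ap *.
  rewrite Lch_expc subr_eq0 -/w.
  have [h1|h1] := eqVneq u b; first by rewrite h1 in Ap; case: (Nb Ap).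
  have [h2|h2] := eqVneq u d; first by rewrite h2 in Ap; case: (Nd Ap).
  have ub : b < u by rewrite lt_neqAle eq_sym h1 u1.
  have [h3|h3] := ltP u d.
    rewrite eq_sym lt_eqF // cos_gt_lem // ltr_norml.
    by apply/andP; split; rewrite /w; lra.
  have du : d < u by rewrite lt_neqAle eq_sym h2 h3.
  by rewrite lt_eqF // cos_lt_lem //; apply/andP; split; rewrite /w; lra.
pose B := A `&` [set p | 0 < Lch b d p].
have BA : B = A.
  apply: Acon.
  - by exists (expc c); split.
  - exists (Lch b d @^-1` [set x | 0 < x]) => //.
    apply: open_comp; last exact: open_gt.
    by move=> x _; exact: Lch_cont.
  - exists (Lch b d @^-1` [set x | 0 <= x]).
      apply: preimage_closed; last exact: closed_ge.
      by move=> x _; exact: Lch_cont.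
    rewrite /B; apply/seteqP; split => p [Ap hp]; split => //=.
      exact: ltW.
    by rewrite lt_neqAle eq_sym Lnz.
have : B (expc a) by rewrite BA.
by move=> [_ /=]; lra.
Qed.

End P6.

Section P7.
Local Open Scope nat_scope.

Lemma least_ex (P : nat -> Prop) (M : nat) : (forall x, P x -> x <= M) ->
  exists b, (P b \/ (b = M.+1 /\ forall x, ~ P x)) /\ (forall x, P x -> b <= x).
Proof.
move=> PM.
case: (pselect (exists x, P x)) => [ex|nex].
  pose Pb := fun x => `[< P x >].
  have exb : exists x, Pb x by case: ex => x Px; exists x; apply/asboolP.
  case: (ex_minnP exb) => b /asboolP Pb' minb.
  exists b; split; first by left.
  by move=> x Px; apply: minb; apply/asboolP.
exists M.+1; split; first by right; split => // x Px; apply: nex; exists x.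
by move=> x Px; exfalso; apply: nex; exists x.
Qed.

Lemma cyc_code (Rg T : nat -> Prop) (M : nat) :
  (forall x, Rg x -> x <= M) -> Rg 0 -> (forall x, T x -> Rg x) ->
  (forall x y z w, x < y -> y < z -> z < w ->
     T x -> T z -> Rg y -> ~ T y -> Rg w -> ~ T w -> False) ->
  (forall x y z w, x < y -> y < z -> z < w ->
     Rg x -> ~ T x -> Rg z -> ~ T z -> T y -> T w -> False) ->
  exists b c (fl : bool), b <= M.+1 /\ c <= M.+1 /\
    forall x, Rg x -> (T x <-> (if fl then (x < b \/ c <= x) else (b <= x /\ x < c))).
Proof.
move=> RM R0 TR alt1 alt2.
case: (pselect (T 0)) => T0.
-
  have [b [hb minb]] := least_ex (P := fun x => Rg x /\ ~ T x) (M := M)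
    (fun x h => RM x h.1).
  have [c [hc minc]] := least_ex (P := fun x => T x /\ b <= x) (M := M)
    (fun x h => RM x (TR x h.1)).
  have bM : b <= M.+1.
    by case: hb => [[/RM h _]|[-> _]] //; lia.
  have cM : c <= M.+1.
    by case: hc => [[/TR/RM h _]|[-> _]] //; lia.
  exists b, c, true; split => //; split => // x Rx; split.
  + move=> Tx; have [xb|bx] := ltnP x b; first by left.
    by right; apply: minc.
  + case=> [xb|cx].
      case: (pselect (T x)) => // nTx.
      by have := minb x (conj Rx nTx); lia.
    case: (pselect (T x)) => // nTx.
    have Pbx := minb x (conj Rx nTx).
    case: hb => [[Rb nTb]|[_ hn]]; last by case: (hn x).
    case: hc => [[Tc bc]|[ceq _]]; last by have := RM x Rx; lia.
    have b0 : 0 < b by rewrite lt0n; apply/eqP => e; apply: nTb; rewrite e.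
    have bc' : b < c.
      by rewrite ltn_neqAle bc andbT; apply/eqP => e; apply: nTb; rewrite e.
    have cx' : c < x.
      by rewrite ltn_neqAle cx andbT; apply/eqP => e; apply: nTx; rewrite -e.
    by case: (alt1 0 b c x b0 bc' cx' T0 Tc Rb nTb Rx nTx).
-
  have [b [hb minb]] := least_ex (P := T) (M := M) (fun x h => RM x (TR x h)).
  have [c [hc minc]] := least_ex (P := fun x => (Rg x /\ ~ T x) /\ b <= x) (M := M)
    (fun x h => RM x h.1.1).
  have bM : b <= M.+1.
    by case: hb => [/TR/RM h|[-> _]] //; lia.
  have cM : c <= M.+1.
    by case: hc => [[[/RM h _] _]|[-> _]] //; lia.
  exists b, c, false; split => //; split => // x Rx; split.
  + move=> Tx; split; first exact: minb.
    rewrite ltnNge; apply/negP => cx.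
    case: hb => [Tb|[_ hn]]; last by case: (hn x).
    case: hc => [[[Rc nTc] bc]|[ceq _]]; last by have := RM x Rx; lia.
    have b0 : 0 < b by rewrite lt0n; apply/eqP => e; apply: T0; rewrite -e.
    have bc' : b < c.
      by rewrite ltn_neqAle bc andbT; apply/eqP => e; apply: nTc; rewrite -e.
    have cx' : c < x.
      by rewrite ltn_neqAle cx andbT; apply/eqP => e; apply: nTc; rewrite e.
    by case: (alt2 0 b c x b0 bc' cx' R0 T0 Rc nTc Tb Tx).
  + case=> bx xc; case: (pselect (T x)) => // nTx.
    by have := minc x (conj (conj Rx nTx) bx); lia.
Qed.

End P7.

Section P8.
Variable R : realType.

Lemma pdist_ge0 (p q : R * R) : 0 <= pdist p q.
Proof. exact: sqrtr_ge0. Qed.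

Lemma hd_le (X Y : set (R * R)) (del : R) : X !=set0 -> Y !=set0 ->
  (forall x, X x -> exists2 y, Y y & pdist x y <= del) ->
  (forall y, Y y -> exists2 x, X x & pdist x y <= del) ->
  hausdorff_dist X Y <= del.
Proof.
move=> [x0 Xx0] [y0 Yy0] hX hY.
rewrite /hausdorff_dist ge_max; apply/andP; split; apply: ge_sup.
- by exists (inf [set pdist x0 b | b in Y]); exists x0.
- move=> _ [a Xa <-]; have [y Yy h] := hX a Xa; apply: le_trans h.
  apply: ge_inf; last by exists y.
  by exists 0 => _ [b _ <-]; exact: pdist_ge0.
- by exists (inf [set pdist a y0 | a in X]); exists y0.
- move=> _ [b Yb <-]; have [x Xx h] := hY b Yb; apply: le_trans h.
  apply: ge_inf; last by exists x.
  by exists 0 => _ [a _ <-]; exact: pdist_ge0.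
Qed.

Lemma iter_Cmap (f : R * R -> R * R) k (A : set (R * R)) :
  iter k (Cmap f) A = iter k f @` A.
Proof.
elim: k => [|k IH] /=; first by rewrite image_id.
by rewrite IH /Cmap image_comp.
Qed.

End P8.

Section P9.
Variable R : realType.
Variables (f : R * R -> R * R) (F : R -> R) (s : R).
Hypothesis hs : s = 1 \/ s = -1.
Hypothesis lift : is_lift f F.
Hypothesis Fd : forall t, F (t + 1) = F t + s.
Hypothesis mono : forall x y, x < y -> s * F x < s * F y.
Variables (n N : nat).
Hypothesis N0 : (0 < N)%N.

Let GD := GD1 hs Fd.
Let Gm := G_mono hs mono.

Definition sg (u : R) : int := sig (G F s) n N u.
Definition sgn (u : R) : nat := `|sg u|%N.

Lemma sg_range u : 0 <= u <= 1 -> 0 <= sg u <= (n * N)%N%:Z.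
Proof. exact: (sig_range GD Gm). Qed.

Lemma sgnE u : 0 <= u <= 1 -> (sgn u)%:Z = sg u.
Proof. by move=> /sg_range /andP[h _]; rewrite /sgn gez0_abs. Qed.

Lemma sgn_le u : 0 <= u <= 1 -> (sgn u <= n * N)%N.
Proof.
move=> hu; have := sg_range hu; rewrite -(sgnE hu) => /andP[_ h].
by rewrite lez_nat in h.
Qed.

Lemma sgn0 : sgn 0 = 0%N.
Proof.
rewrite /sgn /sg /sig.
rewrite (eq_bigr (fun _ => 0)); first by rewrite big1_eq.
by move=> i _; rewrite subrr.
Qed.

Lemma sgn_mono u v : 0 <= u <= 1 -> 0 <= v <= 1 -> u <= v -> (sgn u <= sgn v)%N.
Proof.
move=> hu hv uv; rewrite -lez_nat (sgnE hu) (sgnE hv).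
exact: (sig_mono Gm).
Qed.

Lemma sgn_lt u v : 0 <= u <= 1 -> 0 <= v <= 1 -> (sgn u < sgn v)%N -> u < v.
Proof.
move=> hu hv h; rewrite ltNge; apply/negP => vu.
by have := sgn_mono hv hu vu; rewrite leqNgt h.
Qed.

Lemma sgn_close u v : 0 <= u <= 1 -> 0 <= v <= 1 -> sgn u = sgn v ->
  forall k, (k < n)%N -> `|iter k F u - iter k F v| < N%:R^-1.
Proof.
move=> hu hv e k kn.
have e' : sg u = sg v by rewrite -(sgnE hu) -(sgnE hv) e.
by rewrite -(G_dist F hs); exact: (sig_close Gm N0 hu hv e').
Qed.

Definition Rg (k : nat) := exists u : R, 0 <= u < 1 /\ sgn u = k.
Definition TT (A : set (R * R)) (k : nat) :=
  exists u : R, [/\ 0 <= u < 1, A (expc u) & sgn u = k].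

Lemma in01 (u : R) : 0 <= u < 1 -> 0 <= u <= 1.
Proof. by move=> /andP[a b]; rewrite a ltW. Qed.

Lemma TT_code (A : set (R * R)) : CS1 A ->
  exists b c (fl : bool), (b <= (n * N).+1)%N /\ (c <= (n * N).+1)%N /\
    forall x, Rg x -> (TT A x <->
      (if fl then (x < b \/ c <= x)%N else (b <= x /\ x < c)%N)).
Proof.
move=> [_ [AS [_ Acon]]].
apply: cyc_code.
- by move=> x [u [hu <-]]; apply: sgn_le; exact: in01.
- by exists 0; rewrite sgn0 lexx ltr01.
- by move=> x [u [hu _ <-]]; exists u.
- move=> x y z w xy yz zw [ux [hx Ax ex]] [uz [hz Az ez]] [uy [hy ey]] nTy
    [uw [hw ew]] nTw.
  have h1 : ux < uy by apply: sgn_lt; rewrite ?in01 // ey ex.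
  have h2 : uy < uz by apply: sgn_lt; rewrite ?in01 // ey ez.
  have h3 : uz < uw by apply: sgn_lt; rewrite ?in01 // ew ez.
  apply: (no_alt Acon AS h1 h2 h3) => //.
  + by move: hx hw => /andP[? ?] /andP[? ?]; lra.
  + by move=> Ay; apply: nTy; exists uy.
  + by move=> Aw; apply: nTw; exists uw.
- move=> x y z w xy yz zw [ux [hx ex]] nTx [uz [hz ez]] nTz
    [uy [hy Ay ey]] [uw [hw Aw ew]].
  have h1 : ux < uy by apply: sgn_lt; rewrite ?in01 // ey ex.
  have h2 : uy < uz by apply: sgn_lt; rewrite ?in01 // ey ez.
  have h3 : uz < uw by apply: sgn_lt; rewrite ?in01 // ew ez.
  have h4 : uw < ux + 1.
    by move: hx hw => /andP[? ?] /andP[? ?]; lra.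
  have h5 : ux + 1 < uy + 1 by lra.
  apply: (no_alt Acon AS h2 h3 h4 h5) => //.
  + by move=> Az; apply: nTz; exists uz.
  + by rewrite expcD1 => Ax; apply: nTx; exists ux.
Qed.

End P9.

Section P10.
Variable R : realType.
Variables (f : R * R -> R * R) (F : R -> R) (s : R).
Hypothesis hs : s = 1 \/ s = -1.
Hypothesis lift : is_lift f F.
Hypothesis Fd : forall t, F (t + 1) = F t + s.
Hypothesis mono : forall x y, x < y -> s * F x < s * F y.
Variables (n N : nat).
Hypothesis N0 : (0 < N)%N.

Lemma pdistC (p q : R * R) : pdist p q = pdist q p.
Proof. by rewrite /pdist; congr Num.sqrt; ring. Qed.

Lemma one_side (A A' : set (R * R)) : CS1 A -> CS1 A' ->
  (forall x, Rg F s n N x -> (TT F s n N A x -> TT F s n N A' x)) ->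
  forall k, (k < n)%N -> forall p, A p ->
  exists2 p', A' p' & pdist (iter k f p) (iter k f p') <= 4 * pi / N%:R.
Proof.
move=> [_ [AS _]] _ hT k kn p Ap.
have [u [u0 u1 eu]] := S1_expc 0 (AS _ Ap); rewrite add0r in u1.
rewrite -eu in Ap *.
have hu : 0 <= u < 1 by rewrite u0 u1.
have [u' [hu' A'u' e']] := hT (sgn F s n N u) (ex_intro _ u (conj hu erefl))
  (ex_intro _ u (And3 hu Ap erefl)).
exists (expc u') => //.
rewrite !(iter_lift lift).
apply: le_trans (pdist_expc _ _) _.
have := sgn_close hs Fd mono N0 (in01 hu) (in01 hu') (esym e') kn.
have pi0 := @pi_gt0 R.
rewrite mulrC -[4 * pi / _]mulrC.
move=> h; apply: ler_wpM2r; first by nra.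
exact: ltW.
Qed.

Lemma close_TT (A A' : set (R * R)) : CS1 A -> CS1 A' ->
  (forall x, Rg F s n N x -> (TT F s n N A x <-> TT F s n N A' x)) ->
  forall k, (k < n)%N ->
  hausdorff_dist (iter k (Cmap f) A) (iter k (Cmap f) A') <= 4 * pi / N%:R.
Proof.
move=> CA CA' hT k kn.
rewrite !iter_Cmap; apply: hd_le.
- by case: CA => [[p Ap] _]; exists (iter k f p); exists p.
- by case: CA' => [[p Ap] _]; exists (iter k f p); exists p.
- move=> _ [p Ap <-].
  have [p' Ap' h] := one_side CA CA' (fun x r => proj1 (hT x r)) kn Ap.
  by exists (iter k f p') => //; exists p'.
- move=> _ [p Ap <-].
  have [p' Ap' h] := one_side CA' CA (fun x r => proj2 (hT x r)) kn Ap.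
  by exists (iter k f p'); [exists p'|rewrite pdistC].
Qed.

Definition dec (t : nat * nat * bool) (x : nat) : Prop :=
  if t.2 then (x < t.1.1 \/ t.1.2 <= x)%N else (t.1.1 <= x /\ x < t.1.2)%N.

Lemma sep_bound (e : R) (m : nat) (E : 'I_m -> set (R * R)) : 4 * pi / N%:R < e ->
  @separated_family R (set (R * R)) (@CS1 R) (@hausdorff_dist R) (Cmap f) n e m E ->
  (m <= (n * N).+2 * (n * N).+2 * 2)%N.
Proof.
move=> eN [EC Esep].
set M := (n * N)%N.
have codes : forall i : 'I_m, exists t : 'I_M.+2 * 'I_M.+2 * bool,
    forall x, Rg F s n N x -> (TT F s n N (E i) x <->
      dec (nat_of_ord t.1.1, nat_of_ord t.1.2, t.2) x).
  move=> i; have [b [c [fl [hb [hc H]]]]] := TT_code hs Fd mono n N0 (EC i).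
  have hb' : (b < M.+2)%N by rewrite ltnS.
  have hc' : (c < M.+2)%N by rewrite ltnS.
  by exists (Ordinal hb', Ordinal hc', fl).
have [cd hcd] := choice codes.
have cd_inj : injective cd.
  move=> i j eij; apply/eqP; apply: contraT => nij.
  have [k kn hk] := Esep i j nij.
  have hT : forall x, Rg F s n N x -> (TT F s n N (E i) x <-> TT F s n N (E j) x).
    move=> x rx; rewrite (hcd i x rx) (hcd j x rx) eij //.
  have := close_TT (EC i) (EC j) hT kn; lra.
by have := @leq_card _ _ cd cd_inj; rewrite card_ord !card_prod !card_ord card_bool.
Qed.

End P10.

Section P11.
Variable R : realType.

Lemma poly_exp (C eta x : R) : 0 < C -> 0 < eta -> 0 <= x ->
  6 * C < eta ^+ 3 * x -> C * x ^+ 2 <= expR (eta * x).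
Proof.
move=> C0 e0 x0 h.
have := @expR_ge1Dxn R (eta * x) 2 (mulr_ge0 (ltW e0) x0).
have -> : (3`!)%:R = 6 :> R by [].
rewrite exprMn.
have x2 : 0 <= x ^+ 2 by exact: sqr_ge0.
have e3 : eta ^+ 3 * x ^+ 3 = (eta ^+ 3 * x) * x ^+ 2 by ring.
rewrite e3.
have : 6 * C * x ^+ 2 <= (eta ^+ 3 * x) * x ^+ 2.
  by apply: ler_wpM2r => //; exact: ltW.
move=> h1 h2; apply: le_trans h2.
have : C * x ^+ 2 <= eta ^+ 3 * x * x ^+ 2 / 6.
  rewrite ler_pdivlMr //; lra.
lra.
Qed.

Lemma ln_le_lin (B C eta x : R) : 0 < B -> B <= C * x ^+ 2 -> 0 < C -> 0 < eta ->
  0 <= x -> 6 * C < eta ^+ 3 * x -> ln B <= eta * x.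
Proof.
move=> B0 BC C0 e0 x0 h.
have := poly_exp C0 e0 x0 h => h2.
rewrite -(expRK (eta * x)) ler_ln ?posrE ?expR_gt0 //.
exact: le_trans h2.
Qed.

End P11.

Section P12.
Variable R : realType.

Lemma CS1_pt : @CS1 R [set (1, 0)].
Proof.
split; first by exists (1, 0).
split; first by move=> p ->; rewrite /S1 /=; rewrite expr1n expr0n addr0.
split; [exact: compact_set1|exact: connected1].
Qed.

Lemma ms_ge1 (f : R * R -> R * R) n e :
  (1%:E <= max_separated (@CS1 R) (@hausdorff_dist R) (Cmap f) n e)%E.
Proof.
apply: ereal_sup_ubound; exists 1%N => //.
exists (fun _ => [set (1, 0)]); split; first by move=> i; exact: CS1_pt.
by move=> i j; rewrite !ord1 eqxx.
Qed.

End P12.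

Section P13.
Variable R : realType.
Variables (f : R * R -> R * R) (F : R -> R) (s : R).
Hypothesis hs : s = 1 \/ s = -1.
Hypothesis lift : is_lift f F.
Hypothesis Fd : forall t, F (t + 1) = F t + s.
Hypothesis mono : forall x y, x < y -> s * F x < s * F y.

Lemma ent_term (e : R) : 0 < e ->
  limn_esup (fun n : nat => (((n%:R)^-1)%:E *
    elog (max_separated (@CS1 R) (@hausdorff_dist R) (Cmap f) n e))%E) = 0%E.
Proof.
move=> e0.
pose N := (Num.truncn (4 * pi / e)).+1.
have N0 : (0 < N)%N by [].
have pi0 := @pi_gt0 R.
have eN : 4 * pi / N%:R < e.
  have h := truncnS_gt (4 * pi / e); rewrite -/N ltr_pdivrMr // in h.
  rewrite ltr_pdivrMr ?ltr0n //; lra.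
pose ms n := max_separated (@CS1 R) (@hausdorff_dist R) (Cmap f) n e.
pose B n : R := ((n * N).+2 * (n * N).+2 * 2)%N%:R.
have hub : forall n, (ms n <= (B n)%:E)%E.
  move=> n; apply: ge_ereal_sup => _ [m [E hE] <-]; rewrite lee_fin ler_nat.
  exact: (sep_bound hs lift Fd mono N0 eN hE).
have fin : forall n, ms n = (fine (ms n))%:E.
  move=> n; have h1 := ms_ge1 f n e; have h2 := hub n.
  by move: h1 h2; rewrite -/(ms n); case: (ms n).
have rb : forall n, 1 <= fine (ms n) <= B n.
  move=> n; have h1 := ms_ge1 f n e; have h2 := hub n.
  by rewrite -/(ms n) (fin n) !lee_fin in h1 h2; rewrite h1 h2.
pose w n := (n%:R)^-1 * ln (fine (ms n)).
transitivity (limn_esup (fun n => (w n)%:E)).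
  congr limn_esup; apply: funext => n.
  by rewrite -/(ms n) {1}(fin n) /= -EFinM.
have hw : w @ \oo --> 0.
  apply/cvgr0Pnorm_le => eta eta0.
  pose C : R := 2 * (N.+2)%:R ^+ 2.
  have C0 : 0 < C by rewrite /C mulr_gt0 // exprn_gt0 // ltr0n.
  pose K := (Num.truncn (6 * C / eta ^+ 3)).+1.
  exists K => // n /= Kn.
  have n1 : (1 <= n)%N by apply: leq_trans Kn.
  have n0 : 0 < n%:R :> R by rewrite ltr0n.
  have /andP[r1 r2] := rb n.
  have lr0 : 0 <= ln (fine (ms n)) by apply: ln_ge0.
  have w0 : 0 <= w n by rewrite /w mulr_ge0 // invr_ge0 ltW.
  rewrite ger0_norm //.
  have hBC : B n <= C * n%:R ^+ 2.
    have h : ((n * N).+2 <= n * N.+2)%N by nia.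
    have hn : ((n * N).+2 * (n * N).+2 * 2 <= 2 * (N.+2 * N.+2) * (n * n))%N.
      by have := leq_mul h h; nia.
    move: hn; rewrite -(ler_nat R) /B /C !natrM !expr2 => hn; lra.
  have e3 : 0 < eta ^+ 3 by rewrite exprn_gt0.
  have hK : 6 * C < eta ^+ 3 * n%:R.
    have h := truncnS_gt (6 * C / eta ^+ 3); rewrite ltr_pdivrMr // in h.
    have : (K%:R : R) <= n%:R by rewrite ler_nat.
    rewrite -/K in h; nra.
  have B0 : 0 < B n by rewrite /B ltr0n.
  have lB := ln_le_lin B0 hBC C0 eta0 (ltW n0) hK.
  have lrB : ln (fine (ms n)) <= ln (B n).
    by rewrite ler_ln ?posrE // (lt_le_trans ltr01 r1).
  rewrite /w ler_pdivrMl //; lra.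
have hc : (fun n => (w n)%:E) @ \oo --> 0%E.
  apply: cvg_EFin; first exact: nearW.
  exact: hw.
by have [_ ->] := cvg_limn_einf_sup hc.
Qed.

End P13.

Theorem theorem5p2 (R : realType) (f : R * R -> R * R) :
  morse_smale f ->
  topological_entropy (@CS1 R) (@hausdorff_dist R) (Cmap f) = 0%E.
Proof.
move=> ms; have [F [s [hs Fc lift Fd mono]]] := ms_lift ms.
rewrite /topological_entropy.
apply/eqP; rewrite eq_le; apply/andP; split.
  apply: ge_ereal_sup => _ [e /= e0 <-].
  by rewrite (ent_term hs lift Fd mono e0).
apply: ereal_sup_ubound; exists 1; first exact: ltr01.
by rewrite (ent_term hs lift Fd mono ltr01).
Qed.
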